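(* Let $\alpha\in\mathcal{P}(n)$ with $\delta(\alpha)=(d_k)_{k\ge1}$. Then for every $k\ge1$: (1) $d_{k+1}-d_k\le1$, with equality if and only if $d_j=j$ for all $1\le j\le k+1$; (2) if $d_k\ge d_{k+1}$, then $d_{k+1}\ge d_{k+2}$.
   Context: A partition of a positive integer $n$ is a finite non-increasing sequence $\alpha=(\alpha_1,\dots,\alpha_l)$ of positive integers with sum $n$; $\mathcal{P}(n)$ is the set of partitions of $n$, and $\alpha_i=0$ for $i>l$. The diagonal sequence of $\alpha$ is $\delta(\alpha)=(d_k)_{k\ge1}$ with $d_k=|\{i:1\le i\le k,\ \alpha_i+i-1\ge k\}|$. *)

(* Defs.v *)
From mathcomp Require Import all_boot.
Set Implicit Arguments. Unset Strict Implicit. Unset Printing Implicit Defensive.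

Definition is_partition (n : nat) (a : seq nat) : Prop :=
  [/\ sorted geq a, all (fun x => 0 < x) a & sumn a = n].

(* alpha_i with 1-based indexing; alpha_i = 0 for i > length. *)
Definition part (a : seq nat) (i : nat) : nat := nth 0 a i.-1.

Definition diag (a : seq nat) (k : nat) : nat :=
  count (fun i => k <= part a i + i - 1) (iota 1 k).

(* Main.v *)
Require Import Defs.
From mathcomp Require Import all_boot.
From mathcomp Require Import zify.

Lemma nth_step (a : seq nat) : sorted geq a -> forall j, nth 0 a j.+1 <= nth 0 a j.
Proof.
elim: a => [|x s IH] //= Hs [|j] /=.
  by case: s Hs {IH} => //= y s /andP[].
apply: IH; exact: (path_sorted Hs).
Qed.

Lemma ivt (g : nat -> nat) (step : forall t, 1 <= t -> g t.+1 <= (g t).+1)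
  i m : 1 <= i -> g i <= m -> forall j, i <= j -> m < g j ->
  exists t, [/\ i < t, t <= j & g t = m.+1].
Proof.
move=> Hi Hgi; elim=> [|j IH] Hij Hj; first by lia.
case: (leqP j i) => Hji.
  case: (eqVneq i j.+1) => Eij; first by subst i; lia.
  have E : i = j by lia.
  subst j; exists i.+1; have := step i Hi; split => //; lia.
case: (leqP (g j) m) => Hgj.
  exists j.+1; have := step j (leq_trans Hi (ltnW Hji)); split => //; lia.
have [t [H1 H2 H3]] := IH (ltnW Hji) Hgj.
by exists t; split => //; lia.
Qed.

Lemma count_split (g : nat -> nat) k s :
  count (fun i => k <= g i) s =
  count (fun i => k.+1 <= g i) s + count (fun i => g i == k) s.
Proof.
elim: s => //= x s ->.
case: (ltngtP k (g x)) => H /=; lia.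
Qed.

Theorem lemma2p1 (n : nat) (a : seq nat) :
  is_partition n a ->
  forall k : nat, 1 <= k ->
    [/\ diag a k.+1 <= (diag a k).+1,
        diag a k.+1 = (diag a k).+1 <-> (forall j, 1 <= j <= k.+1 -> diag a j = j)
      & diag a k.+1 <= diag a k -> diag a k.+2 <= diag a k.+1].
Proof.
case=> Hs _ _ k Hk.
set g := fun i => part a i + i - 1.
have step : forall t, 1 <= t -> g t.+1 <= (g t).+1.
  move=> [|t] // _; rewrite /g /part /=.
  have := @nth_step a Hs t; lia.
have Dk : forall k, diag a k = count (fun i => k <= g i) (iota 1 k) by [].
have DS : forall k, diag a k.+1 =
   count (fun i => k.+1 <= g i) (iota 1 k) + (k.+1 <= g k.+1).
  by move=> kk; rewrite Dk -addn1 iotaD count_cat /= addn0 add1n addn1.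
have DK : forall k, diag a k =
   count (fun i => k.+1 <= g i) (iota 1 k) + count (fun i => g i == k) (iota 1 k).
  by move=> kk; rewrite Dk count_split.
have wit : forall k, 0 < count (fun i => g i == k) (iota 1 k) ->
    exists i, [/\ 1 <= i, i <= k & g i = k].
  move=> kk; rewrite -has_count => /hasP [i]; rewrite mem_iota => /andP[H1 H2] /eqP H3.
  exists i; split => //; lia.
have nowit : forall k i, 1 <= i -> i <= k -> g i = k ->
    0 < count (fun i => g i == k) (iota 1 k).
  move=> kk i H1 H2 H3; rewrite -has_count; apply/hasP; exists i.
    rewrite mem_iota; lia.
  by apply/eqP.
split.
- rewrite DS DK; case: (k.+1 <= g k.+1); lia.
- split.
  + move=> E.
    have He : k.+1 <= g k.+1 by move: E; rewrite DS DK; case: (k.+1 <= g k.+1); lia.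
    have Hc : count (fun i => g i == k) (iota 1 k) = 0.
      by move: E; rewrite DS DK; case: (k.+1 <= g k.+1); lia.
    have Hall : forall i, 1 <= i -> i <= k.+1 -> k.+1 <= g i.
      move=> i H1 H2; case: (leqP k.+1 (g i)) => // Hl.
      have [Hgk|Hgk] := eqVneq (g i) k.
        case: (ltnP k i) => Hik.
          have : i = k.+1 by lia.
          move=> E'; subst i; lia.
        by have := nowit k i H1 Hik Hgk; rewrite Hc.
      move/eqP: Hgk => Hgk.
      have Hgi : g i <= k.-1 by lia.
      have [t [T1 T2 T3]] := @ivt g step i _ H1 Hgi _ H2 ltac:(lia).
      have : t <> k.+1 by move=> E'; subst t; lia.
      move=> Tn; have := nowit k t (leq_trans H1 (ltnW T1)) ltac:(lia) ltac:(lia).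
      by rewrite Hc.
    move=> j /andP[J1 J2]; rewrite Dk.
    rewrite (eq_in_count (a2 := predT)) ?count_predT ?size_iota //.
    move=> i; rewrite mem_iota => /andP[I1 I2] /=.
    have := Hall i I1 ltac:(lia); lia.
  + move=> H; rewrite (H k.+1) ?H //; lia.
- move=> H.
  rewrite DS DK.
  suff : (k.+2 <= g k.+2) -> 0 < count (fun i => g i == k.+1) (iota 1 k.+1).
    case: (k.+2 <= g k.+2); lia.
  move=> H2.
  have H1 : k.+1 <= g k.+1 by have := step k.+1 isT; lia.
  move: H; rewrite DS DK H1 => H.
  have [i [I1 I2 I3]] := wit k ltac:(lia).
  have [t [T1 T2 T3]] := @ivt g step i _ I1 (eq_leq I3) k.+2 ltac:(lia) ltac:(lia).
  have : t <> k.+2 by move=> E'; subst t; lia.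
  move=> Tn; apply: (nowit _ t); lia.
Qed.
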